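(* Let $\frac12<p<1$ and let $f:\mathbb{Z}^+\to[0,\infty)$ be monotonically increasing (non-decreasing). Let $\{N_j\}_{j\ge0}$ be the discrete-time, time-inhomogeneous Markov chain on $\mathbb{N}$ with $N_0=1$, $N_1\sim\mathrm{Bern}\big(\frac{1-p}{p}\big)$, and, for $j\ge1$, conditionally on $N_j$, $N_{j+1}\sim\mathrm{Bin}\big(N_j,\frac{1-p}{p}\big)+\mathrm{Poiss}\big(\frac{1-p}{p}f(j)\big)$ with independent summands. Let $\mathbf{P}^*$ denote its law and $K=\#\{j\in\mathbb{Z}^+:N_j=0\}$. If $$\sum_{j=1}^{\infty}e^{-\frac{1-p}{2p-1}f(j)}<\infty,$$ then $\mathbf{P}^*(K<\infty)=1$. *)

(* Defs.v *)
From HB Require Import structures.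
From mathcomp Require Import all_boot all_order all_algebra.
From mathcomp Require Import all_classical all_reals all_analysis.
Set Implicit Arguments. Unset Strict Implicit. Unset Printing Implicit Defensive.
Import Order.TTheory GRing.Theory Num.Theory.
Import numFieldNormedType.Exports.
Local Open Scope ring_scope.
Local Open Scope classical_set_scope.

Definition binom_pmf {R : realType} (n : nat) (q : R) (k : nat) : R :=
  ('C(n, k))%:R * q ^+ k * (1 - q) ^+ (n - k).

Definition poisson_pmf {R : realType} (l : R) (k : nat) : R :=
  expR (- l) * l ^+ k / (k`!)%:R.

(* Transition probability P(N_{j+1} = b | N_j = a) of the chain.
   j = 0 : N_1 ~ Bern((1-p)/p) (the chain starts at N_0 = 1).
   j >= 1 : Bin(a, (1-p)/p) + Poiss((1-p)/p * f j), independent summands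
   (law = convolution of the two pmfs). *)
Definition trans {R : realType} (p : R) (f : nat -> R) (j a b : nat) : R :=
  let q := (1 - p) / p in
  if j == 0%N then
    (if b == 0%N then 1 - q else if b == 1%N then q else 0)
  else \sum_(k < b.+1) binom_pmf a q k * poisson_pmf (q * f j) (b - k)%N.

Definition is_chain {R : realType} (p : R) (f : nat -> R)
  {d : measure_display} {T : measurableType d}
  (P : probability T R) (N : nat -> T -> nat) : Prop :=
  (forall j, measurable_fun setT (N j)) /\
  forall (n : nat) (a : nat -> nat),
    P [set w | forall i, (i <= n)%N -> N i w = a i] =
    (((a 0%N == 1%N)%:R * \prod_(i < n) trans p f i (a i) (a i.+1)) : R)%:E.

(* Main.v *)
Require Import Defs.
From HB Require Import structures.
From mathcomp Require Import all_boot all_order all_algebra.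
From mathcomp Require Import all_classical all_reals all_analysis.
Import Order.TTheory GRing.Theory Num.Theory.
Import numFieldNormedType.Exports.
Local Open Scope ring_scope.
Local Open Scope classical_set_scope.

From mathcomp Require Import ring lra zify.
Import Defs.
Set Implicit Arguments. Unset Strict Implicit. Unset Printing Implicit Defensive.
Section A.
Variable R : realType.
Local Open Scope ereal_scope.

Lemma eseries_EFin (u : nat -> R) : cvgn (series u) ->
  \sum_(k <oo) (u k)%:E = (limn (series u))%:E.
Proof.
move=> cu; rewrite -EFin_lim //; apply/congr_lim/funext => n /=.
by rewrite sumEFin.
Qed.

Lemma eseries_expR (x : R) : \sum_(k <oo) (x ^+ k / k`!%:R)%:E = (expR x)%:E.
Proof. exact: (eseries_EFin (is_cvg_series_exp_coeff x)). Qed.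

Lemma pgf (q lam y : R) (a : nat) : (0 <= q)%R -> (q <= 1)%R -> (0 <= lam)%R -> (0 <= y)%R ->
  \sum_(b <oo) ((\sum_(k < b.+1) binom_pmf a q k * poisson_pmf lam (b - k)%N) * y ^+ b)%:E
  = ((1 - q + q * y) ^+ a * expR (- (lam * (1 - y))))%:E.
Proof.
move=> q0 q1 l0 y0.
pose c k := (binom_pmf a q k * y ^+ k)%R.
pose g m := (poisson_pmf lam m * y ^+ m)%R.
have c0 k : (0 <= c k)%R.
  by rewrite /c /binom_pmf; repeat apply: mulr_ge0; rewrite ?exprn_ge0 ?subr_ge0 ?ler0n //.
have g0 m : (0 <= g m)%R.
  by rewrite /g /poisson_pmf; repeat apply: mulr_ge0; rewrite ?expR_ge0 ?exprn_ge0 ?invr_ge0 ?ler0n //.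
have E1 b : ((\sum_(k < b.+1) binom_pmf a q k * poisson_pmf lam (b - k)%N) * y ^+ b =
    \sum_(k < a.+1) (if (k <= b)%N then c k * g (b - k)%N else 0))%R.
  rewrite big_distrl /=.
  rewrite (big_ord_widen (a + b).+1 (fun k => binom_pmf a q k * poisson_pmf lam (b - k)%N * y ^+ b)%R); last by rewrite ltnS leq_addl.
  rewrite (big_ord_widen (a + b).+1 (fun k => if (k <= b)%N then c k * g (b - k)%N else 0)%R); last by rewrite ltnS leq_addr.
  rewrite big_mkcond [RHS]big_mkcond; apply: eq_bigr => i _ /=.
  rewrite ltnS; case: (leqP i b) => ib; last by case: ifP.
  rewrite ltnS; case: (leqP i a) => ia.
    have -> : (y ^+ b = y ^+ i * y ^+ (b - i)%N)%R by rewrite -exprD subnKC.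
    rewrite /c /g; ring.
  by rewrite /binom_pmf bin_small // !mul0r.
transitivity (\sum_(b <oo) \sum_(k < a.+1) (if (k <= b)%N then c k * g (b - k)%N else 0)%:E).
  apply/congr_lim/funext => n; apply: eq_bigr => b _.
  by rewrite E1 sumEFin.
rewrite nneseries_sum; last by move=> i j _; rewrite lee_fin; case: ifP => _ //; exact: mulr_ge0.
have Eg : \sum_(m <oo) (g m)%:E = (expR (- lam) * expR (lam * y))%:E.
  rewrite EFinM -(eseries_expR (lam * y)) -nneseriesZl; last by move=> i _; rewrite lee_fin; apply: mulr_ge0; rewrite ?exprn_ge0 ?invr_ge0 ?ler0n ?mulr_ge0.
  apply/congr_lim/funext => n; apply: eq_bigr => i _.
  by rewrite /g /poisson_pmf -EFinM exprMn; congr (_%:E); ring.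
have Ek k : \sum_(b <oo) (if (k <= b)%N then c k * g (b - k)%N else 0)%:E =
    (c k)%:E * (expR (- lam) * expR (lam * y))%:E.
  rewrite (nneseries_split 0 k); last by move=> i _; rewrite lee_fin; case: ifP => _ //; exact: mulr_ge0.
  rewrite add0n big_nat_cond big1 ?add0e; last first.
    by move=> i /andP[/andP[_ ik] _]; rewrite leqNgt ik.
  rewrite -nneseries_addn; last by move=> i; rewrite lee_fin; case: ifP => _ //; exact: mulr_ge0.
  rewrite -Eg -nneseriesZl; last by move=> i _; rewrite lee_fin.
  apply/congr_lim/funext => n; apply: eq_bigr => i _.
  by rewrite leq_addl addnK EFinM.
under eq_bigr do rewrite Ek.
rewrite sumEFin; congr (_%:E); rewrite -big_distrl /= -expRD.
have -> : (- lam + lam * y = - (lam * (1 - y)))%R by ring.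
congr (_ * _)%R; rewrite exprDn; apply: eq_bigr => i _.
by rewrite /c /binom_pmf -mulr_natl exprMn; ring.
Qed.
Lemma binom_ge0 a (q : R) k : (0 <= q)%R -> (q <= 1)%R -> (0 <= binom_pmf a q k)%R.
Proof. by move=> ? ?; rewrite /binom_pmf; repeat apply: mulr_ge0; rewrite ?exprn_ge0 ?subr_ge0 ?ler0n //. Qed.

Lemma poisson_ge0 (l : R) k : (0 <= l)%R -> (0 <= poisson_pmf l k)%R.
Proof. by move=> ?; rewrite /poisson_pmf; repeat apply: mulr_ge0; rewrite ?expR_ge0 ?exprn_ge0 ?invr_ge0 ?ler0n //. Qed.

Lemma trans_ge0 (p : R) f i a b : (0 <= (1 - p) / p)%R -> ((1 - p) / p <= 1)%R ->
  (forall k, (0 < k)%N -> (0 <= f k)%R) -> (0 <= trans p f i a b)%R.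
Proof.
move=> q0 q1 f0; rewrite /trans /=; case: ifP => i0.
  by case: ifP => _; rewrite ?subr_ge0 //; case: ifP.
rewrite sumr_ge0 // => k _; rewrite mulr_ge0 ?binom_ge0 // poisson_ge0 // mulr_ge0 // f0 // lt0n i0.
by [].
Qed.
End A.
Section M.
Variables (R : realType) (p : R) (f : nat -> R) (d : measure_display) (T : measurableType d)
  (P : probability T R) (N : nat -> T -> nat).
Hypothesis mN : forall j, measurable_fun setT (N j).
Hypothesis HP : forall (n : nat) (a : nat -> nat),
    P [set w | forall i, (i <= n)%N -> N i w = a i] =
    (((a 0%N == 1%N)%:R * \prod_(i < n) trans p f i (a i) (a i.+1)) : R)%:E.

Definition cyl n a := [set w | forall i, (i <= n)%N -> N i w = a i].
Definition upd (a : nat -> nat) n b := fun i => if i == n then b else a i.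

Lemma mpre j b : measurable (N j @^-1` [set b]).
Proof. by rewrite -[X in measurable X]setTI; apply: mN. Qed.

Lemma mcyl n a : measurable (cyl n a).
Proof.
elim: n a => [|n IH] a.
  rewrite (_ : cyl 0 a = N 0 @^-1` [set a 0%N]); first exact: mpre.
  apply/seteqP; split => w /=; first by apply.
  by move=> h i; rewrite leqn0 => /eqP ->.
rewrite (_ : cyl n.+1 a = cyl n a `&` N n.+1 @^-1` [set a n.+1]).
  by apply: measurableI; [exact: IH | exact: mpre].
apply/seteqP; split => w /=.
  by move=> h; split; [move=> i ni; apply: h; apply: leqW | apply: h].
move=> [h1 h2] i; rewrite leq_eqVlt => /orP[/eqP -> //| ]; rewrite ltnS; exact: h1.
Qed.

Local Open Scope ereal_scope.

Lemma Pcyl_upd n a b : P (cyl n.+1 (upd a n.+1 b)) = P (cyl n a) * (trans p f n (a n) b)%:E.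
Proof.
rewrite /cyl !HP -EFinM big_ord_recr /= /upd /= !eqxx.
rewrite (ltn_eqF (ltnSn n)).
congr (_%:E); rewrite mulrA; congr (_ * _ * _)%R.
apply: eq_bigr => i _; have hi := ltn_ord i.
have -> : (nat_of_ord i == n.+1) = false by apply/eqP; lia.
by have -> : (i.+1 == n.+1) = false by apply/eqP; lia.
Qed.

Hypothesis q0 : (0 <= (1 - p) / p)%R.
Hypothesis q1 : ((1 - p) / p <= 1)%R.
Hypothesis f0 : forall k, (0 < k)%N -> (0 <= f k)%R.
Let tr0 i a b : (0 <= trans p f i a b)%R.
Proof. exact: trans_ge0. Qed.

Lemma step i (Z : set T) (G : nat -> R) : measurable Z -> (forall b, (0 <= G b)%R) ->
  (forall a, P (cyl i.+1 a `&` Z) <= P (cyl i.+1 a) * (G (a i.+1))%:E) ->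
  forall a, P (cyl i a `&` Z) <= P (cyl i a) * \sum_(b <oo) (trans p f i (a i) b * G b)%:E.
Proof.
move=> mZ G0 H a.
have sub : cyl i a `&` Z `<=` \bigcup_b (cyl i.+1 (upd a i.+1 b) `&` Z).
  move=> w [cw zw]; exists (N i.+1 w) => //; split => // k.
  rewrite /upd leq_eqVlt => /orP[/eqP -> | ]; first by rewrite eqxx.
  rewrite ltnS => ki; have -> : (k == i.+1) = false by apply/eqP; lia.
  by apply: cw.
apply: le_trans (measure_sigma_subadditive P _ _ sub) _.
- by move=> b; apply: measurableI => //; exact: mcyl.
- by apply: measurableI => //; exact: mcyl.
have := HP i a; rewrite -/(cyl i a) => ->.
rewrite -nneseriesZl; last by move=> b _; rewrite lee_fin mulr_ge0.
apply: lee_nneseries => [b _ _|b _]; first exact: measure_ge0.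
apply: le_trans (H _) _; rewrite /upd eqxx Pcyl_upd.
have := HP i a; rewrite -/(cyl i a) => ->.
by rewrite -!EFinM mulrA.
Qed.
Variable j : nat.

Definition qq := ((1 - p) / p)%R.
Lemma qq0 : (0 <= qq)%R. Proof. exact: q0. Qed.
Lemma qq1 : (qq <= 1)%R. Proof. exact: q1. Qed.
Definition S i := (\sum_(i <= k < j) f k * qq ^+ (j - k))%R.
Definition g i b := ((1 - qq ^+ (j - i)) ^+ b * expR (- S i))%R.

Lemma g0 i b : (0 <= g i b)%R.
Proof. by rewrite /g mulr_ge0 ?expR_ge0 // exprn_ge0 // subr_ge0 exprn_ile1 ?qq0 ?qq1. Qed.

Lemma g_le i b : (g i b <= expR (- S i))%R.
Proof.
rewrite /g ler_piMl ?expR_ge0 // exprn_ile1 // ?subr_ge0 ?exprn_ile1 ?qq0 ?qq1 //.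
by rewrite lerBlDr lerDl exprn_ge0 ?qq0.
Qed.

Lemma gen_step i a : (0 < i)%N -> (i < j)%N ->
  \sum_(b <oo) (trans p f i a b * g i.+1 b)%:E = (g i a)%:E.
Proof.
move=> i0 ij.
have ji : (j - i = (j - i.+1).+1)%N by lia.
transitivity (\sum_(b <oo) ((expR (- S i.+1))%:E *
   ((\sum_(k < b.+1) binom_pmf a qq k * poisson_pmf (qq * f i) (b - k)%N) * (1 - qq ^+ (j - i.+1)) ^+ b)%:E)).
  apply/congr_lim/funext => n; apply: eq_bigr => b _.
  rewrite /trans /= (gtn_eqF i0) -EFinM /g /qq; congr (_%:E); ring.
rewrite nneseriesZl; last first.
  move=> b _; rewrite lee_fin mulr_ge0 ?exprn_ge0 ?subr_ge0 ?exprn_ile1 //.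
  by rewrite sumr_ge0 // => k _; rewrite mulr_ge0 ?binom_ge0 ?qq0 ?qq1 // poisson_ge0 // mulr_ge0 ?qq0 ?f0.
rewrite pgf; try solve [exact: qq0 | exact: qq1 | exact: mulr_ge0 qq0 (f0 i0) | by rewrite subr_ge0 exprn_ile1 ?qq0 ?qq1].
rewrite -EFinM /g; congr (_%:E).
rewrite [S i]/S big_ltn // -/(S i.+1) ji exprS.
have -> : (1 - qq + qq * (1 - qq ^+ (j - i.+1)) = 1 - qq * qq ^+ (j - i.+1))%R by ring.
rewrite mulrC -mulrA -expRD; congr (_ * expR _)%R; ring.
Qed.

Let Z := N j @^-1` [set 0%N].
Let mZ : measurable Z. Proof. exact: mpre. Qed.

Lemma base a : P (cyl j a `&` Z) <= P (cyl j a) * (g j (a j))%:E.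
Proof.
rewrite /g subnn expr0 subrr expr0n /S big_geq // oppr0 expR0 mulr1.
case: eqP => [aj|aj].
  rewrite (_ : cyl j a `&` Z = cyl j a) ?mule1 //.
  by apply/setIidl => w cw; rewrite /Z /= cw // aj.
rewrite (_ : cyl j a `&` Z = set0) ?measure0 ?mule0 //.
by apply/seteqP; split => // w [cw]; rewrite /Z /= cw.
Qed.

Lemma down k : (k < j)%N -> forall a,
  P (cyl (j - k) a `&` Z) <= P (cyl (j - k) a) * (g (j - k) (a (j - k)%N))%:E.
Proof.
elim: k => [_|k IH kj] a; first by rewrite subn0; exact: base.
have e : ((j - k.+1).+1 = j - k)%N by lia.
have := @step (j - k.+1) Z (g (j - k.+1).+1) mZ (g0 _).
rewrite e => /(_ (IH (ltnW kj))) /(_ a).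
by rewrite -e gen_step //; lia.
Qed.

Lemma sum_trans0 a : \sum_(b <oo) (trans p f 0 a b)%:E = 1.
Proof.
rewrite (nneseries_split 0 2); last by move=> k _; rewrite lee_fin tr0.
rewrite add0n eseries0 ?adde0; last first.
  by move=> k k2 _; rewrite /trans /=; case: k k2 => [|[|k]].
rewrite big_nat_recr //= big_nat_recr //= big_geq // add0e /trans /= -EFinD.
by congr (_%:E); ring.
Qed.

Lemma PZ : (0 < j)%N -> P Z <= (expR (- S 1))%:E.
Proof.
move=> j0.
pose a : nat -> nat := fun _ => 1%N.
have H1 := down (k := (j - 1)%N) ltac:(lia).
rewrite (_ : (j - (j - 1))%N = 1%N) in H1; last by lia.
have H0 := @step 0 Z (g 1) mZ (g0 _) H1 a.
have Pc0 : P (cyl 0 a) = 1 by rewrite /cyl HP big_ord0 /a /= mulr1.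
have Hs : \sum_(b <oo) (trans p f 0 (a 0%N) b * g 1 b)%:E <= (expR (- S 1))%:E.
  apply: le_trans (_ : \sum_(b <oo) ((expR (- S 1))%:E * (trans p f 0 (a 0%N) b)%:E) <= _).
    apply: lee_nneseries => [b _ _|b _]; first by rewrite lee_fin mulr_ge0 ?g0.
    by rewrite -EFinM lee_fin mulrC ler_wpM2r ?g_le.
  by rewrite nneseriesZl ?sum_trans0 ?mule1 // => b _; rewrite lee_fin.
have mc0 := mcyl 0 a.
apply: le_trans (_ : P ((cyl 0 a `&` Z) `|` ~` cyl 0 a) <= _).
  apply: le_measure; rewrite ?inE.
  - exact: mZ.
  - by apply: measurableU; [exact: measurableI | exact: measurableC].
  - by move=> w zw; case: (pselect (cyl 0 a w)) => h; [left|right].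
apply: le_trans (measureU2 _ _ _) _.
- exact: measurableI.
- exact: measurableC.
have hc : P (~` cyl 0 a) <= 0 by rewrite (probability_setC P mc0) Pc0 subee.
apply: le_trans (leeD (lexx _) hc) _; rewrite adde0.
by apply: le_trans H0 _; rewrite Pc0 mul1e.
Qed.
End M.
Section E.
Variable R : realType.

Lemma exp_bound (x e : R) : 0 <= x -> 0 < e -> e <= 1 ->
  expR (- (x * (1 - e))) <= expR 1 * (expR (- x) + e).
Proof.
move=> x0 e0 e1.
have [xe|xe] := lerP (x * e) 1.
  have -> : - (x * (1 - e)) = - x + x * e by ring.
  rewrite expRD mulrC ler_pM ?expR_ge0 // ?ler_expR //.
  by rewrite lerDl ltW.
have hx : 1 / e < x by rewrite ltr_pdivrMr.
have h1 : - (x * (1 - e)) <= 1 - 1 / e.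
  have -> : 1 - 1 / e = - (1 / e * (1 - e)) by field; rewrite gt_eqF.
  by rewrite lerN2 ler_wpM2r ?subr_ge0 // ltW.
apply: le_trans (_ : expR (1 - 1 / e) <= _); first by rewrite ler_expR.
rewrite expRD ler_pM2l ?expR_gt0 //.
apply: le_trans (_ : e <= _); last by rewrite lerDr expR_ge0.
set A := expR (- (1 / e)); set B := expR (1 / e).
have AB : A * B = 1 by rewrite /A /B -expRD addNr expR0.
have hB : 1 + 1 / e <= B by exact: expR_ge1Dx.
have A0 : 0 <= A by exact: expR_ge0.
have eB : 1 <= e * B.
  apply: le_trans (_ : e * (1 + 1 / e) <= _); last by rewrite ler_pM2l.
  rewrite mulrDr mulr1 mulrA mulr1 divff ?gt_eqF // lerDr ltW //.
nra.
Qed.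
Lemma geo (q : R) m L : (\sum_(m <= k < m + L) q ^+ (m + L - k)%N) * (1 - q) = q * (1 - q ^+ L).
Proof.
elim: L => [|L IH]; first by rewrite addn0 big_geq // mul0r expr0 subrr mulr0.
rewrite addnS big_nat_recr /= ?leq_addr // subSn // subnn expr1.
rewrite (eq_big_nat _ _ (F2 := fun k => q * q ^+ (m + L - k)%N)); last first.
  by move=> k /andP[_ kl]; rewrite subSn ?exprS // ltnW.
rewrite -big_distrr /= mulrDl -mulrA IH exprS; ring.
Qed.

Lemma Slow (q : R) (f : nat -> R) m j : 0 <= q -> (0 < m)%N -> (m <= j)%N ->
  (forall k, (0 < k)%N -> 0 <= f k) ->
  (forall i k, (0 < i)%N -> (i <= k)%N -> f i <= f k) ->
  f m * \sum_(m <= k < j) q ^+ (j - k)%N <= \sum_(1 <= k < j) f k * q ^+ (j - k)%N.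
Proof.
move=> q0 m0 mj f0 fm.
rewrite [X in _ <= X](big_cat_nat _ (n := m)) //=; apply: ler_wpDl.
  by rewrite big_nat_cond sumr_ge0 // => k /andP[/andP[k1 _] _]; rewrite mulr_ge0 ?f0 ?exprn_ge0.
rewrite big_distrr /= big_nat_cond [X in _ <= X]big_nat_cond.
apply: ler_sum => k /andP[/andP[mk _] _].
by rewrite ler_wpM2r ?exprn_ge0 // fm.
Qed.
Lemma expS_bound (p : R) (f : nat -> R) n : 1 / 2 < p -> p < 1 ->
  (forall k, (0 < k)%N -> 0 <= f k) ->
  (forall i k, (0 < i)%N -> (i <= k)%N -> f i <= f k) ->
  expR (- \sum_(1 <= k < n.+2) f k * ((1 - p) / p) ^+ (n.+2 - k)%N) <=
  expR 1 * (expR (- ((1 - p) / (2 * p - 1) * f (n./2).+1)) + ((1 - p) / p) ^+ (n./2)).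
Proof.
move=> hp1 hp2 f0 fm.
have p0 : 0 < p by apply: lt_trans hp1; rewrite divr_gt0.
set q := (1 - p) / p.
have q0 : 0 < q by rewrite /q divr_gt0 // subr_gt0.
have q1 : q < 1 by rewrite /q ltr_pdivrMr // mul1r; lra.
set h := n./2.
have hh : (h + h <= n)%N by rewrite /h addnn -{2}(odd_double_half n) leq_addl.
set m := h.+1.
set L := (n.+2 - m)%N.
have mL : (m + L = n.+2)%N by rewrite /L /m; lia.
have G := geo q m L; rewrite mL in G.
have hS' : f m * \sum_(m <= k < n.+2) q ^+ (n.+2 - k)%N <= \sum_(1 <= k < n.+2) f k * q ^+ (n.+2 - k)%N.
  by apply: Slow => //; [exact: ltW | rewrite /m; lia].
set Gs := \sum_(m <= k < n.+2) q ^+ (n.+2 - k)%N in G hS'.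
set c := (1 - p) / (2 * p - 1).
have cq : c = q / (1 - q) by rewrite /c /q; field; lra.
have Gs_eq : Gs = q * (1 - q ^+ L) / (1 - q) by rewrite -G; field; lra.
have x0 : 0 <= c * f m.
  by apply: mulr_ge0; [rewrite cq divr_ge0 // ?subr_ge0 ltW | exact: f0].
apply: le_trans (_ : expR (- (c * f m * (1 - q ^+ L))) <= _).
  rewrite ler_expR lerN2; apply: le_trans hS'; rewrite Gs_eq cq.
  by rewrite le_eqVlt; apply/orP; left; apply/eqP; field; lra.
apply: le_trans (exp_bound x0 _ _) _.
- by rewrite exprn_gt0.
- by rewrite exprn_ile1 ?ltW.
rewrite ler_pM2l ?expR_gt0 // lerD2l ler_wiXn2l ?ltW //.
rewrite /L /m; lia.
Qed.
End E.
Section F.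
Variable R : realType.
Local Open Scope ereal_scope.

Lemma half_series (w : nat -> \bar R) : (forall k, 0 <= w k) ->
  \sum_(n <oo) w (n./2) <= \sum_(k <oo) (w k + w k).
Proof.
move=> w0.
have E2 K : \sum_(0 <= n < K.*2) w (n./2) = \sum_(0 <= k < K) (w k + w k).
  elim: K => [|K IH]; first by rewrite !big_geq.
  rewrite doubleS big_nat_recr //= big_nat_recr //= IH big_nat_recr //=.
  by rewrite doubleK uphalf_double addeA.
apply: lime_le; first by apply: is_cvg_nneseries => n _ _; exact: w0.
apply: nearW => K.
apply: le_trans (_ : \sum_(0 <= n < K.*2) w (n./2) <= _).
  rewrite -addnn [X in _ <= X](big_cat_nat _ (n := K)) ?leq_addr //= leeDl //.
  by apply: sume_ge0 => n _; exact: w0.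
rewrite E2; apply: nneseries_lim_ge => n _ _; exact: adde_ge0.
Qed.

Lemma finite_nat_bound (A : set nat) : finite_set A -> exists n, forall k, A k -> (k < n)%N.
Proof.
move=> /finite_fsetP[X ->]; exists (\max_(x <- finmap.enum_fset X) x)%N.+1 => k kX.
rewrite ltnS; exact: (leq_bigmax_seq (F := id)).
Qed.
End F.

Unset Implicit Arguments. Set Strict Implicit. Set Printing Implicit Defensive.
Theorem proposition8 (R : realType) (p : R) (f : nat -> R)
  (d : measure_display) (T : measurableType d)
  (P : probability T R) (N : nat -> T -> nat) :
  1 / 2 < p -> p < 1 ->
  (forall j, (0 < j)%N -> 0 <= f j) ->
  (forall i j, (0 < i)%N -> (i <= j)%N -> f i <= f j) ->
  is_chain p f P N ->
  cvgn (series (fun j : nat => expR (- ((1 - p) / (2 * p - 1) * f j.+1)))) ->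
  P [set w | finite_set [set j : nat | (0 < j)%N /\ N j w = 0%N]] = 1%E.
Proof.
move=> hp1 hp2 f0 fm [mN HP] hcv.
have p0 : 0 < p by apply: lt_trans hp1; rewrite divr_gt0.
set q := (1 - p) / p.
have q0 : 0 < q by rewrite /q divr_gt0 // subr_gt0.
have q1 : q < 1 by rewrite /q ltr_pdivrMr // mul1r; lra.
set c := (1 - p) / (2 * p - 1).
pose u k := expR (- (c * f k.+1)).
pose F n := N n.+2 @^-1` [set 0%N].
have mF n : measurable (F n) by exact: mpre.
have hPF n : (P (F n) <= (expR 1 * (u (n./2) + q ^+ (n./2)))%:E)%E.
  apply: le_trans (PZ mN HP (ltW q0) (ltW q1) f0 (j := n.+2) isT) _.
  by rewrite lee_fin; exact: expS_bound.
have fin : (\sum_(n <oo) P (F n) < +oo)%E.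
  pose w k := ((u k)%:E + (q ^+ k)%:E)%E.
  have w0 k : (0 <= w k)%E by rewrite adde_ge0 // lee_fin ?expR_ge0 ?exprn_ge0 ?ltW.
  apply: (@le_lt_trans _ _ (\sum_(n <oo) ((expR 1)%:E * w (n./2)))%E).
    apply: lee_nneseries => [n _ _|n _]; first exact: measure_ge0.
    by apply: le_trans (hPF n) _; rewrite /w -EFinD -EFinM.
  rewrite nneseriesZl; last by move=> n _; exact: w0.
  have hU : (\sum_(k <oo) (u k)%:E = (limn (series u))%:E)%E by exact: eseries_EFin.
  have hQ : (\sum_(k <oo) (q ^+ k)%:E = (limn (series (geometric 1 q)))%:E)%E.
    rewrite -eseries_EFin; last by apply: is_cvg_geometric_series; rewrite ger0_norm ?ltW.
    by apply/congr_lim/funext => n; apply: eq_bigr => k _; rewrite /geometric /= mul1r.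
  have hW : (\sum_(k <oo) w k = (limn (series u) + limn (series (geometric 1 q)))%:E)%E.
    rewrite /w nneseriesD ?hU ?hQ //.
      by move=> k _ _; rewrite lee_fin expR_ge0.
    by move=> k _ _; rewrite lee_fin exprn_ge0 ?ltW.
  apply: (@le_lt_trans _ _ ((expR 1)%:E * \sum_(k <oo) (w k + w k))%E).
    by rewrite lee_pmul2l ?lte_fin ?expR_gt0 // half_series.
  rewrite nneseriesD // hW -EFinD -EFinM; exact: ltry.
have L0 := lim_sup_set_cvg0 mF fin.
have mL : measurable (lim_sup_set F).
  by apply: bigcapT_measurable => k; apply: bigcup_measurable => i _; exact: mF.
rewrite (_ : [set w | _] = ~` lim_sup_set F).
  by rewrite (probability_setC P mL) L0 sube0.
apply/seteqP; split => w /=.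
  move=> /finite_nat_bound [n hn] hL.
  have [k /= nk Fk] := hL n I.
  have := hn k.+2 (conj isT Fk); lia.
move=> hL.
have [n hn] : exists n, forall k, (n <= k)%N -> N k.+2 w <> 0%N.
  apply: contrapT => hne; apply: hL => n _.
  have := hne; move/forallNP/(_ n)/existsNP => [k /not_implyP [nk /contrapT Fk]].
  by exists k.
apply: (sub_finite_set (B := `I_n.+2)); last exact: finite_II.
move=> j [j0 Nj] /=; case: (ltnP j n.+2) => // jn.
have := hn (j - 2)%N ltac:(lia); rewrite (_ : (j - 2).+2 = j)%N //; lia.
Qed.
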